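(* Let $R$ be a ring, $M$ an $R$-module of finite length, and $A_1,A_2,B_1,B_2\subset M$ submodules such that $A_1$ and $A_2$ are coprime, $A_1\oplus A_2=M$, $B_1\oplus B_2=M$, and $A_1\cong B_1$. Then $A_1\oplus B_2=M$ and $B_1\oplus A_2=M$.
   Context: Modules are left modules. A module has finite length if every totally ordered set of submodules is finite. For submodules $C,D$ of $M$, $C\oplus D=M$ means the natural map $C\oplus D\to M$ is an isomorphism. An $R$-module $D$ is a divisor of $M$ if $M\cong D\oplus N$ for some $R$-module $N$. Two $R$-modules of finite length are coprime if $0$ is (up to isomorphism) the only $R$-module that is a divisor of both. *)

(* Defs.v *)
From HB Require Import structures.
From mathcomp Require Import all_boot all_algebra.
Set Implicit Arguments. Unset Strict Implicit. Unset Printing Implicit Defensive.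
Import GRing.Theory.
Local Open Scope ring_scope.

(* Left modules over a ring R are MathComp's [lmodType R].
   A submodule of M is represented by a predicate [S : M -> Prop]
   that is closed under the module operations. *)

Definition is_submod (R : pzRingType) (M : lmodType R) (S : M -> Prop) : Prop :=
  [/\ S 0,
      (forall x y, S x -> S y -> S (x + y)) &
      (forall (r : R) x, S x -> S (r *: x))].

Definition submod_le (R : pzRingType) (M : lmodType R) (S T : M -> Prop) : Prop :=
  forall x, S x -> T x.

(* A set of submodules is a predicate C on predicates; it is finite
   if its members are (extensionally) among finitely many s 0, ..., s (n-1). *)
Definition finite_length (R : pzRingType) (M : lmodType R) : Prop :=
  forall C : (M -> Prop) -> Prop,
    (forall S, C S -> is_submod S) ->
    (forall S T, C S -> C T -> submod_le S T \/ submod_le T S) ->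
    exists (n : nat) (s : nat -> (M -> Prop)),
      forall S, C S -> exists2 i, (i < n)%N & forall x, S x <-> s i x.

Definition internal_direct_sum (R : pzRingType) (M : lmodType R)
    (C D : M -> Prop) : Prop :=
  (forall m : M, exists c d, [/\ C c, D d & m = c + d]) /\
  (forall c1 c2 d1 d2 : M, C c1 -> C c2 -> D d1 -> D d2 ->
     c1 + d1 = c2 + d2 -> c1 = c2 /\ d1 = d2).

(* Two submodules A, B of M are isomorphic as R-modules: there is a map
   A -> B (given by its values on A) that is R-linear, injective and onto B. *)
Definition submod_iso (R : pzRingType) (M : lmodType R) (A B : M -> Prop) : Prop :=
  exists f : M -> M,
    [/\ (forall x, A x -> B (f x)),
        (forall x y, A x -> A y -> f (x + y) = f x + f y),
        (forall (r : R) x, A x -> f (r *: x) = r *: f x),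
        (forall x y, A x -> A y -> f x = f y -> x = y) &
        (forall y, B y -> exists2 x, A x & f x = y)].

(* An R-module D is a divisor of the submodule A (viewed as an R-module):
   A is isomorphic to D (+) N for some R-module N, i.e. there is an injective
   R-linear map D * N -> M whose image is exactly A. *)
Definition divisor_of_submod (R : pzRingType) (M : lmodType R)
    (D : lmodType R) (A : M -> Prop) : Prop :=
  exists (N : lmodType R) (f : {linear (D * N)%type -> M}),
    [/\ injective f,
        (forall z, A (f z)) &
        (forall y, A y -> exists z, f z = y)].

Definition trivial_module (R : pzRingType) (D : lmodType R) : Prop :=
  forall x : D, x = 0.

Definition coprime_submod (R : pzRingType) (M : lmodType R) (A B : M -> Prop) : Prop :=
  forall D : lmodType R,
    divisor_of_submod D A -> divisor_of_submod D B -> trivial_module D.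

(* Main.v *)
Require Import Defs.
From HB Require Import structures.
From mathcomp Require Import all_boot all_algebra.
From mathcomp Require Import boolp.
Set Implicit Arguments. Unset Strict Implicit. Unset Printing Implicit Defensive.
Import GRing.Theory.
Local Open Scope ring_scope.

Section Sub.
Variables (R : pzRingType) (M : lmodType R) (P : M -> Prop).
Hypothesis HP : is_submod P.

Definition subT (_ : is_submod P) := {x : M | `[< P x >]}.
Local Notation sT := (subT HP).
HB.instance Definition _ := [Choice of sT by <:].

Lemma val_subT (x : sT) : P (val x). Proof. by case: x => y /= /asboolP. Qed.
Lemma sub0 : `[< P 0 >]. Proof. by apply/asboolP; case: HP. Qed.
Lemma subD (x y : sT) : `[< P (val x + val y) >].
Proof. case: HP => _ hD _; apply/asboolP; apply: hD; exact: val_subT. Qed.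
Lemma subZ r (x : sT) : `[< P (r *: val x) >].
Proof. case: HP => _ _ hZ; apply/asboolP; apply: hZ; exact: val_subT. Qed.
Lemma subN (x : sT) : `[< P (- val x) >].
Proof. rewrite -scaleN1r; exact: subZ. Qed.

Definition s0 : sT := exist (fun z => `[< P z >]) 0 sub0.
Definition sadd (x y : sT) : sT := exist (fun z => `[< P z >]) _ (subD x y).
Definition sopp (x : sT) : sT := exist (fun z => `[< P z >]) _ (subN x).
Definition sscale r (x : sT) : sT := exist (fun z => `[< P z >]) _ (subZ r x).

Lemma saddA : associative sadd.
Proof. by move=> x y z; apply: val_inj; rewrite /= addrA. Qed.
Lemma saddC : commutative sadd.
Proof. by move=> x y; apply: val_inj; rewrite /= addrC. Qed.
Lemma sadd0 : left_id s0 sadd.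
Proof. by move=> x; apply: val_inj; rewrite /= add0r. Qed.
Lemma saddN : left_inverse s0 sopp sadd.
Proof. by move=> x; apply: val_inj; rewrite /= addNr. Qed.
HB.instance Definition _ := GRing.isZmodule.Build sT saddA saddC sadd0 saddN.
Lemma sscaleA a b v : sscale a (sscale b v) = sscale (a * b) v.
Proof. by apply: val_inj; rewrite /= scalerA. Qed.
Lemma sscale1 : left_id 1 sscale.
Proof. by move=> x; apply: val_inj; rewrite /= scale1r. Qed.
Lemma sscaleDr : right_distributive sscale +%R.
Proof. by move=> a x y; apply: val_inj; rewrite /= scalerDr. Qed.
Lemma sscaleDl v : {morph sscale^~ v: a b / a + b}.
Proof. by move=> a b; apply: val_inj; rewrite /= scalerDl. Qed.
HB.instance Definition _ := GRing.Zmodule_isLmodule.Build R sT sscaleA sscale1 sscaleDr sscaleDl.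

Lemma val_add (x y : sT) : val (x + y) = val x + val y. Proof. by []. Qed.
Lemma val_scale r (x : sT) : val (r *: x) = r *: val x. Proof. by []. Qed.
Lemma val_zero : val (0 : sT) = 0. Proof. by []. Qed.
End Sub.

Section Emb.
Variables (R : pzRingType) (M : lmodType R).

Definition lin (g : M -> M) :=
  (forall x y, g (x + y) = g x + g y) /\ (forall (r : R) x, g (r *: x) = r *: g x).

Lemma lin0 g : lin g -> g 0 = 0.
Proof. by case=> hD _; apply: (addrI (g 0)); rewrite -hD !addr0. Qed.
Lemma linN g : lin g -> forall x, g (- x) = - g x.
Proof. by move=> [_ hZ] x; rewrite -scaleN1r hZ scaleN1r. Qed.
Lemma linB g : lin g -> forall x y, g (x - y) = g x - g y.
Proof. by move=> hg x y; rewrite hg.1 linN. Qed.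

Variables (P Q : M -> Prop) (HP : is_submod P) (HQ : is_submod Q).
Variables (g : M -> M) (Hg : lin g).

Definition emb (_ : lin g) (z : subT HP * subT HQ) : M := g (val z.1) + val z.2.

Lemma emb_lin : linear_for *:%R (emb Hg).
Proof.
move=> r [a b] [c d]; rewrite /emb /=.
case: Hg => hD hZ; rewrite hD hZ scalerDr.
by rewrite -!addrA; congr (_ + _); rewrite addrCA.
Qed.
HB.instance Definition _ := GRing.isLinear.Build R (subT HP * subT HQ)%type M *:%R (emb Hg) emb_lin.

Lemma divisor_crit (A : M -> Prop) :
  (forall x y, P x -> Q y -> g x + y = 0 -> x = 0 /\ y = 0) ->
  (forall x y, P x -> Q y -> A (g x + y)) ->
  (forall m, A m -> exists x y, [/\ P x, Q y & m = g x + y]) ->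
  divisor_of_submod (subT HP) A.
Proof.
move=> hinj hin hsurj; exists (subT HQ), (emb Hg : {linear _ -> M}); split.
- move=> [a b] [c d]; rewrite /emb /= => e.
  have := hinj (val a - val c) (val b - val d).
  case.
  + by case: HP => h0 hD hZ; rewrite -scaleN1r; apply: hD; [exact: val_subT| apply: hZ; exact: val_subT].
  + by case: HQ => h0 hD hZ; rewrite -scaleN1r; apply: hD; [exact: val_subT| apply: hZ; exact: val_subT].
  + rewrite (linB Hg); have -> : g (val a) - g (val c) + (val b - val d) = (g (val a) + val b) - (g (val c) + val d) by rewrite opprD addrACA.
    by move: e; rewrite /emb /= => ->; rewrite subrr.
  by move=> /eqP; rewrite subr_eq0 => /eqP/val_inj -> /eqP; rewrite subr_eq0 => /eqP/val_inj ->.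
- by move=> [a b]; rewrite /emb /=; apply: hin; exact: val_subT.
- move=> y /hsurj [x [z [px qz ->]]].
  exists (exist (fun u => `[< P u >]) x (asboolT px), exist (fun u => `[< Q u >]) z (asboolT qz)).
  by [].
Qed.
End Emb.

Section Fit.
Variables (R : pzRingType) (M : lmodType R).
Hypothesis FL : finite_length M.

Lemma chain_rep (P : nat -> M -> Prop) :
  (forall k, is_submod (P k)) ->
  (forall i j, submod_le (P i) (P j) \/ submod_le (P j) (P i)) ->
  exists i j, (i < j)%N /\ (forall x, P i x <-> P j x).
Proof.
move=> hsub hch.
have [n [s hs]] : exists (n : nat) (s : nat -> (M -> Prop)),
      forall S, (exists k, S = P k) -> exists2 i, (i < n)%N & forall x, S x <-> s i x.
  apply: FL; first by move=> S [k ->].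
  by move=> S T [k ->] [l ->].
apply: contrapT => hno.
have hF : forall k : 'I_n.+1, exists i : 'I_n, forall x, P k x <-> s i x.
  move=> k; have [i lt_in hi] := hs (P k) (ex_intro _ (val k) erefl).
  by exists (Ordinal lt_in).
have [F hFk] := choice hF.
have injF : injective F.
  move=> a b eab; apply: val_inj; apply/eqP; apply: contrapT => /eqP neab.
  have hab : forall x, P a x <-> P b x.
    by move=> x; rewrite hFk eab -hFk.
  have [lt|lt] : (a < b)%N \/ (b < a)%N.
    by case: (ltngtP a b) neab => // _ _; [left|right].
  + by apply: hno; exists a, b.
  + by apply: hno; exists b, a; split=> // x; rewrite hab.
by have := leq_card F injF; rewrite !card_ord ltnn.
Qed.

Variables (A : M -> Prop) (HA : is_submod A) (w : M -> M) (Hw : lin w)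
  (wA : forall x, A x -> A (w x)).

Lemma iter_lin k : lin (iter k w).
Proof.
elim: k => [|k [IHD IHZ]]; first by split.
split=> [x y|r x]; rewrite !iterS ?IHD ?IHZ; [exact: Hw.1 | exact: Hw.2].
Qed.

Lemma iterA k x : A x -> A (iter k w x).
Proof. by elim: k => [//|k IH] /IH /wA. Qed.

Lemma fitting : exists n,
  (forall m x, A x -> iter m w x = 0 -> iter n w x = 0) /\
  (forall j x, A x -> exists2 x', A x' & iter n w x = iter (n + j)%N w x').
Proof.
case: HA => A0 AD AZ.
pose K k x := A x /\ iter k w x = 0.
have Ksub k : is_submod (K k).
  split; first by split=> //; exact: lin0 (iter_lin k).
  + by move=> x y [ax ex] [ay ey]; split; [exact: AD|rewrite (iter_lin k).1 ex ey addr0].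
  + by move=> r x [ax ex]; split; [exact: AZ|rewrite (iter_lin k).2 ex scaler0].
have Kmono i j : (i <= j)%N -> submod_le (K i) (K j).
  move=> /subnK <- x [ax ex]; split=> //; rewrite iterD ex; exact: lin0 (iter_lin _).
have hchK : forall i' j', submod_le (K i') (K j') \/ submod_le (K j') (K i').
  by move=> i' j'; case: (leqP i' j') => h; [left; apply: Kmono | right; apply: Kmono; apply: ltnW].
have [i [j [lij hij]]] := chain_rep Ksub hchK.
have Ka : forall x, K i.+1 x -> K i x.
  by move=> x hx; apply/hij; apply: (Kmono i.+1) => //.
have Kall : forall m x, A x -> iter (i + m)%N w x = 0 -> iter i w x = 0.
  elim=> [|m IH] x ax; first by rewrite addn0.
  rewrite addnS iterSr => /(IH _ (wA ax)); rewrite -iterSr => e.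
  by case: (Ka x (conj ax e)).
pose I k y := exists2 x, A x & iter k w x = y.
have Isub k : is_submod (I k).
  split; first by exists 0 => //; exact: lin0 (iter_lin k).
  + by move=> _ _ [x ax <-] [y ay <-]; exists (x + y); [exact: AD|exact: (iter_lin k).1].
  + by move=> r _ [x ax <-]; exists (r *: x); [exact: AZ|exact: (iter_lin k).2].
have Imono i' j' : (i' <= j')%N -> submod_le (I j') (I i').
  move=> /subnK <- _ [x ax <-]; exists (iter (j' - i') w x); first exact: iterA.
  by rewrite -iterD addnC.
have hchI : forall i' j', submod_le (I i') (I j') \/ submod_le (I j') (I i').
  by move=> i' j'; case: (leqP i' j') => h; [right; apply: Imono | left; apply: Imono; apply: ltnW].
have [i2 [j2 [lij2 hij2]]] := chain_rep Isub hchI.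
have Ia : forall y, I i2 y -> I i2.+1 y.
  by move=> y /hij2 hy; apply: (Imono i2.+1 j2).
have Iall : forall m x, A x -> exists2 x', A x' & iter i2 w x = iter (i2 + m)%N w x'.
  elim=> [|m IH] x ax; first by exists x; rewrite ?addn0.
  have [x' ax' ->] := IH x ax.
  have [x'' ax'' e''] : I i2.+1 (iter i2 w x') by apply: Ia; exists x'.
  exists x'' => //; rewrite addnC iterD -e'' -iterD; congr (iter _ w _); by rewrite !addnS addnC.
exists (i + i2)%N; split.
- move=> m x ax e.
  have := Kall (m + i2)%N x ax.
  have e2 : iter (i + (m + i2))%N w x = 0 by rewrite (addnC m i2) addnA iterD e (lin0 (iter_lin _)).
  move=> /(_ e2) e3.
  by rewrite addnC iterD e3 (lin0 (iter_lin _)).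
- move=> j0 x ax.
  have [x' ax' e] := Iall j0 x ax.
  exists x' => //.
  by rewrite iterD e -iterD addnA.
Qed.
End Fit.

Section Core.
Variables (R : pzRingType) (M : lmodType R).
Hypothesis FL : finite_length M.

Lemma inj_surj (A : M -> Prop) (HA : is_submod A) (e : M -> M) (He : lin e)
  (eA : forall x, A x -> A (e x)) :
  (forall x, A x -> e x = 0 -> x = 0) ->
  forall y, A y -> exists2 x, A x & e x = y.
Proof.
move=> inj y ay.
have [n [_ hI]] := fitting FL HA He eA.
have [x' ax' ex] := hI 1%N y ay.
exists x' => //.
have injn : forall k x, A x -> iter k e x = 0 -> x = 0.
  elim=> [//|k IH] x ax; rewrite iterSr => /(IH _ (eA _ ax)); exact: inj.
apply/eqP; rewrite eq_sym -subr_eq0; apply/eqP; apply: (injn n).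
- case: HA => _ AD AZ; apply: AD => //; rewrite -scaleN1r; apply: AZ; exact: eA.
- by rewrite (linB (iter_lin He n)) ex addn1 iterSr subrr.
Qed.

Variables (A1 A2 : M -> Prop) (H1 : is_submod A1) (H2 : is_submod A2).
Hypothesis cop : coprime_submod A1 A2.
Variables (w g t : M -> M) (Hw : lin w) (Hg : lin g) (Ht : lin t).
Hypotheses (gA : forall x, A1 x -> A2 (g x)) (tA : forall x, A2 x -> A1 (t x))
  (wt : forall x, A1 x -> w x = t (g x)).

Lemma wA : forall x, A1 x -> A1 (w x).
Proof. by move=> x ax; rewrite wt //; apply: tA; exact: gA. Qed.

Lemma nilpotent : exists n, forall x, A1 x -> iter n w x = 0.
Proof.
have [n [hK hI]] := fitting FL H1 Hw wA.
exists n.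
have HW : lin (iter n w) by exact: iter_lin.
case: (H1) => A10 A1D A1Z; case: (H2) => A20 A2D A2Z.
have A1B x y : A1 x -> A1 y -> A1 (x - y).
  by move=> ax ay; apply: A1D => //; rewrite -scaleN1r; exact: A1Z.
have A2B x y : A2 x -> A2 y -> A2 (x - y).
  by move=> ax ay; apply: A2D => //; rewrite -scaleN1r; exact: A2Z.
pose I y := exists2 x, A1 x & (iter n w) x = y.
have HI : is_submod I.
  split; first by exists 0 => //; exact: lin0.
  + by move=> _ _ [x ax <-] [y ay <-]; exists (x + y); [exact: A1D|exact: HW.1].
  + by move=> r _ [x ax <-]; exists (r *: x); [exact: A1Z|exact: HW.2].
have IA y : I y -> A1 y by case=> x ax <-; exact: (iterA wA).
pose K x := A1 x /\ (iter n w) x = 0.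
have HK : is_submod K.
  split; first by split=> //; exact: lin0.
  + by move=> x y [ax ex] [ay ey]; split; [exact: A1D|rewrite HW.1 ex ey addr0].
  + by move=> r x [ax ex]; split; [exact: A1Z|rewrite HW.2 ex scaler0].
pose K2 z := A2 z /\ (iter n w) (t z) = 0.
have HK2 : is_submod K2.
  split; first by split=> //; rewrite (lin0 Ht) (lin0 HW).
  + by move=> x y [ax ex] [ay ey]; split; [exact: A2D|rewrite Ht.1 HW.1 ex ey addr0].
  + by move=> r x [ax ex]; split; [exact: A2Z|rewrite Ht.2 HW.2 ex scaler0].
have IK y : I y -> iter (n + 1)%N w y = 0 -> y = 0.
  case=> x ax <-; rewrite -iterD => e; have := hK _ x ax e; done.
have d1 : divisor_of_submod (subT HI) A1.
  apply: (divisor_crit HI HK (g := id)) => //.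
  - move=> y k iy [ak ek] e.
    have hy : y = - k by apply/eqP; rewrite -subr_eq0 opprK e.
    have y0 : y = 0.
      apply: IK => //; rewrite addn1 iterS.
      have -> : iter n w y = 0 by rewrite hy (linN HW) ek oppr0.
      exact: lin0.
    by split=> //; move: e; rewrite y0 add0r.
  - by move=> x y /IA ax [ay _]; exact: A1D.
  - move=> m am; have [x' ax' e] := hI n m am.
    exists ((iter n w) x'), (m - (iter n w) x'); split.
    + by exists x'.
    + split; first by apply: A1B => //; exact: (iterA wA).
      by rewrite (linB HW) e -iterD subrr.
    + by rewrite addrC subrK.
have d2 : divisor_of_submod (subT HI) A2.
  apply: (divisor_crit HI HK2 (g := g)) => //.
  - move=> y k iy [ak ek] e.
    have y0 : y = 0.
      apply: IK => //; rewrite addn1 iterSr.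
      have : (iter n w) (t (g y + k)) = 0 by rewrite e (lin0 Ht) (lin0 HW).
      by rewrite Ht.1 HW.1 ek addr0 -wt; [exact: id | exact: IA].
    by split=> //; move: e; rewrite y0 (lin0 Hg) add0r.
  - by move=> x y /IA ax [ay _]; apply: A2D => //; exact: gA.
  - move=> m am; have [x' ax' e] := hI (n + 1)%N (t m) (tA am).
    exists ((iter n w) x'), (m - g ((iter n w) x')); split.
    + by exists x'.
    + split; first by apply: A2B => //; apply: gA; exact: (iterA wA).
      rewrite (linB Ht) (linB HW) e -wt; last exact: (iterA wA).
      by rewrite -iterS -iterD addn1 subrr.
    + by rewrite addrC subrK.
have triv := cop d1 d2.
move=> x ax.
have ix : `[< I ((iter n w) x) >] by apply: asboolT; exists x.
have := triv (exist (fun u => `[< I u >]) ((iter n w) x) ix).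
by move=> /(congr1 val).
Qed.
End Core.

Section Main.
Variables (R : pzRingType) (M : lmodType R).

Lemma subB (C : M -> Prop) : is_submod C -> forall x y, C x -> C y -> C (x - y).
Proof. by case=> _ hD hZ x y cx cy; apply: hD => //; rewrite -scaleN1r; exact: hZ. Qed.

Lemma proj_ex (C D : M -> Prop) : is_submod C -> is_submod D ->
  internal_direct_sum C D ->
  exists p, [/\ lin p, forall m, C (p m), forall m, D (m - p m),
     forall x, C x -> p x = x & forall x, D x -> p x = 0].
Proof.
move=> HC HD [hex huniq].
have [p hp] : {p : M -> M & forall m, C (p m) /\ D (m - p m)}.
  apply: (@choice M M (fun m c => C c /\ D (m - c))) => m; have [c [d [cc dd ->]]] := hex m.
  by exists c; rewrite addrC addKr.
have key : forall c d, C c -> D d -> p (c + d) = c.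
  move=> c d cc dd; have [h1 h2] := hp (c + d).
  have := huniq (p (c + d)) c (c + d - p (c + d)) d h1 cc h2 dd.
  by rewrite addrC subrK => /(_ erefl) [].
case: (HC) => C0 CD CZ; case: (HD) => D0 DD DZ.
exists p; split.
- split.
  + move=> x y; have [hx1 hx2] := hp x; have [hy1 hy2] := hp y.
    have -> : x + y = (p x + p y) + ((x - p x) + (y - p y)).
      by rewrite addrACA !subrKC.
    by apply: key; [exact: CD | exact: DD].
  + move=> r x; have [hx1 hx2] := hp x.
    have -> : r *: x = r *: p x + r *: (x - p x) by rewrite -scalerDr subrKC.
    by apply: key; [exact: CZ | exact: DZ].
- by move=> m; case: (hp m).
- by move=> m; case: (hp m).
- by move=> x cx; rewrite -{1}[x]addr0 key.
- by move=> x dx; rewrite -{1}[x]add0r key.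
Qed.

Lemma ds_crit (C D : M -> Prop) (HC : is_submod C) (HD : is_submod D) h :
  lin h -> (forall m, D m <-> h m = 0) ->
  (forall m, exists2 c, C c & h c = h m) ->
  (forall c, C c -> h c = 0 -> c = 0) -> internal_direct_sum C D.
Proof.
move=> Hh hD hs hi; split.
- move=> m; have [c cc e] := hs m; exists c, (m - c); split => //.
  + by apply/hD; rewrite (linB Hh) e subrr.
  + by rewrite addrC subrK.
- move=> c1 c2 d1 d2 cc1 cc2 dd1 dd2 e.
  have e' : h c1 = h c2.
    by have := congr1 h e; rewrite !Hh.1 (proj1 (hD _) dd1) (proj1 (hD _) dd2) !addr0.
  have : c1 - c2 = 0 by apply: hi; [exact: subB | rewrite (linB Hh) e' subrr].
  move/eqP; rewrite subr_eq0 => /eqP c12; split=> //.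
  by move: e; rewrite c12 => /addrI.
Qed.
End Main.

Unset Implicit Arguments.
Theorem proposition2p9 (R : pzRingType) (M : lmodType R)
    (A1 A2 B1 B2 : M -> Prop) :
  finite_length M ->
  is_submod A1 -> is_submod A2 -> is_submod B1 -> is_submod B2 ->
  coprime_submod A1 A2 ->
  internal_direct_sum A1 A2 ->
  internal_direct_sum B1 B2 ->
  submod_iso A1 B1 ->
  internal_direct_sum A1 B2 /\ internal_direct_sum B1 A2.
Proof.
move=> FL H1 H2 HB1 HB2 cop dsA dsB [phi [phiB phiD phiZ phiI phiS]].
have [p1 [Hp1 p1A p2A p1id p1z]] := proj_ex H1 H2 dsA.
have [q1 [Hq1 q1B q2B q1id q1z]] := proj_ex HB1 HB2 dsB.
have [psi hpsi] : {psi : M -> M & forall y, B1 y -> A1 (psi y) /\ phi (psi y) = y}.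
  apply: (@choice M M (fun y x => B1 y -> A1 x /\ phi x = y)) => y.
  case: (EM (B1 y)) => [/phiS [x ax <-]|nb]; last by exists 0.
  by exists x.
case: (H1) => A10 A1D A1Z; case: (H2) => A20 A2D A2Z.
case: (HB1) => B10 B1D B1Z; case: (HB2) => B20 B2D B2Z.
case: Hp1 => p1D p1Z; case: Hq1 => q1D q1Z.
have Hp1 : lin p1 by [].
have Hq1 : lin q1 by [].
have phi0 : phi 0 = 0.
  by apply: (addrI (phi 0)); rewrite -phiD // !addr0.
have psiphi x : A1 x -> psi (phi x) = x.
  move=> ax; have [h1 h2] := hpsi _ (phiB _ ax); exact: phiI.
pose Phi m := phi (p1 m).
have PhiE m : Phi m = phi (p1 m) by [].
clearbody Phi.
pose Psi m := psi (q1 m).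
have PsiE m : Psi m = psi (q1 m) by [].
clearbody Psi.
have HPhi : lin Phi.
  split=> [x y|r x]; rewrite !PhiE ?p1D ?p1Z; [exact: phiD | exact: phiZ].
have HPsi : lin Psi.
  split=> [x y|r x]; rewrite !PsiE ?q1D ?q1Z.
  - have [h1 h2] := hpsi _ (q1B x); have [h3 h4] := hpsi _ (q1B y).
    have [h5 h6] := hpsi _ (B1D _ _ (q1B x) (q1B y)).
    apply: phiI => //; first exact: A1D.
    by rewrite phiD // h2 h4 h6.
  - have [h1 h2] := hpsi _ (q1B x).
    have [h5 h6] := hpsi _ (B1Z r _ (q1B x)).
    apply: phiI => //; first exact: A1Z.
    by rewrite phiZ // h2 h6.
case: (HPhi) => PhiD PhiZ; case: (HPsi) => PsiD PsiZ.
have PsiA m : A1 (Psi m) by rewrite PsiE; exact: (hpsi _ (q1B m)).1.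
pose g m := Phi m - p1 (Phi m).
have gE m : g m = Phi m - p1 (Phi m) by [].
clearbody g.
have Hg : lin g.
  split=> [x y|r x]; rewrite !gE ?PhiD ?PhiZ ?p1D ?p1Z; [by rewrite opprD addrACA | by rewrite scalerBr].
case: (Hg) => gD gZ.
pose w m := Psi (g m).
have wE m : w m = Psi (g m) by [].
have Hw : lin w by split=> [x y|r x]; rewrite !wE ?gD ?gZ ?PsiD ?PsiZ.
have [n nil] := nilpotent FL H1 H2 cop Hw Hg HPsi (fun x _ => ltac:(rewrite gE; exact: p2A))
  (fun x _ => PsiA x) (fun x _ => wE x).
clearbody w.
case: (Hw) => wD wZ.
pose f m := p1 (Phi m).
have fE m : f m = p1 (Phi m) by [].
clearbody f.
have Hf : lin f by split=> [x y|r x]; rewrite !fE ?PhiD ?PhiZ ?p1D ?p1Z.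
have PhiA x : A1 x -> Phi x = phi x by move=> ax; rewrite PhiE p1id.
have PsiPhi x : A1 x -> Psi (Phi x) = x.
  by move=> ax; rewrite PsiE PhiA // q1id ?psiphi //; exact: phiB.
have decomp x : A1 x -> x = Psi (f x) + w x.
  by move=> ax; rewrite wE gE -PsiD fE addrC subrK PsiPhi.
pose e m := m - w m.
have eE m : e m = m - w m by [].
clearbody e.
have He : lin e.
  split=> [x y|r x]; rewrite !eE ?wD ?wZ; [by rewrite opprD addrACA | by rewrite scalerBr].
have wA1 x : A1 x -> A1 (w x) by move=> _; rewrite wE; exact: PsiA.
have eA1 x : A1 x -> A1 (e x) by move=> ax; rewrite eE; apply: subB => //; exact: wA1.
have einj x : A1 x -> e x = 0 -> x = 0.
  move=> ax; rewrite eE => /eqP; rewrite subr_eq0 => /eqP ex.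
  have : forall k, x = iter k w x by elim=> [//|k IH]; rewrite iterS -IH.
  by move=> /(_ n) ->; rewrite nil.
have eS := inj_surj FL H1 He eA1 einj.
have eq_e x : A1 x -> e x = Psi (f x) by move=> ax; rewrite eE {1}(decomp x ax) addrK.
have fA1 x : A1 x -> A1 (f x) by move=> _; rewrite fE; exact: p1A.
have finj x : A1 x -> f x = 0 -> x = 0.
  by move=> ax fx; apply: einj => //; rewrite eq_e // fx (lin0 HPsi).
have fS := inj_surj FL H1 Hf fA1 finj.
have Psiinj c : A1 c -> Psi c = 0 -> c = 0.
  move=> ac; have [x ax <-] := fS c ac => e0.
  by rewrite (einj x ax _) ?(lin0 Hf) // eq_e.
split.
- apply: (ds_crit H1 HB2 HPsi).
  + move=> m; split=> [bm|pm]; first by have := lin0 HPsi; rewrite PsiE (lin0 Hq1) => h; rewrite PsiE q1z.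
    have q0 : q1 m = 0.
      have [h1 h2] := hpsi _ (q1B m); rewrite -h2; move: pm; rewrite PsiE => ->; exact: phi0.
    by have := q2B m; rewrite q0 subr0.
  + move=> m; have [x ax ex] := eS (Psi m) (PsiA m).
    by exists (f x); [exact: fA1 | rewrite -eq_e].
  + exact: Psiinj.
- apply: (ds_crit HB1 H2 Hp1).
  + move=> m; split=> [am|pm]; first exact: p1z.
    by have := p2A m; rewrite pm subr0.
  + move=> m; have [x ax ex] := fS (p1 m) (p1A m).
    by exists (phi x); [exact: phiB | rewrite -ex fE PhiA].
  + move=> b bb pb.
    have [h1 h2] := hpsi _ bb.
    have : f (psi b) = 0 by rewrite fE PhiA // h2.
    by move=> /(finj _ h1) h0; rewrite -h2 h0 phi0.
Qed.
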